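(* Let $\mathcal{X}$ be a Banach space (complex scalars) and $T \in \mathcal{L}(\mathcal{X})$. Suppose there is a subspace $Y \subset \mathcal{X}$ such that $T|_Y$ is an isomorphism (onto its image) and $d(Y, TY) > 0$. Then for every $\lambda \in \mathbb{C}$, $(T - \lambda I)|_Y$ is an isomorphism and $d(Y, (T - \lambda I)Y) > 0$.
   Context: For subspaces $\mathcal{U}, \mathcal{V}$ of a Banach space, $d(\mathcal{U},\mathcal{V}) = \inf\{\|u - v\| : u \in \mathcal{U}, \|u\|=1, v \in \mathcal{V}\}$. *)

(* Defs.v *)
From HB Require Import structures.
From mathcomp Require Import all_boot all_order all_algebra.
From mathcomp Require Import complex.
From mathcomp Require Import all_classical all_reals all_analysis.
Set Implicit Arguments. Unset Strict Implicit. Unset Printing Implicit Defensive.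
Import Order.TTheory GRing.Theory Num.Theory.
Import numFieldNormedType.Exports.
Local Open Scope classical_set_scope.
Local Open Scope ring_scope.

(* Scalars: the complex numbers R[i] over a real field R : realType.
   The norm of a normedModType over R[i] takes values in R[i]
   (nonnegative reals embedded in R[i]); we read its real part. *)

Definition linear_subspace (R : realType) (X : normedModType R[i]) (Y : set X) :=
  Y 0 /\ forall (a : R[i]) (u v : X), Y u -> Y v -> Y (a *: u + v).

Definition closed_subspace (R : realType) (X : normedModType R[i]) (Y : set X) :=
  linear_subspace Y /\ closed Y.

(* S|_Y is an isomorphism onto its image: bounded below on Y
   (hence injective on Y with bounded inverse on S Y). *)
Definition iso_on (R : realType) (X : normedModType R[i]) (S : X -> X) (Y : set X) :=
  exists2 c : R[i], 0 < c & forall y, Y y -> `|y| <= c * `|S y|.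

(* d(U,V) = inf { ||u - v|| : u in U, ||u|| = 1, v in V }  (in \bar R; inf of
   the empty set is +oo). *)
Definition subspace_dist (R : realType) (X : normedModType R[i]) (U V : set X)
  : \bar R :=
  ereal_inf [set x : \bar R | exists u v, [/\ U u, `|u| = 1, V v &
                                           x = (complex.Re `|u - v|)%:E]].

Definition img (R : realType) (X : normedModType R[i]) (S : X -> X) (Y : set X)
  : set X := S @` Y.

(* Main.v *)
Require Import Defs.
From HB Require Import structures.
From mathcomp Require Import all_boot all_order all_algebra.
From mathcomp Require Import complex.
From mathcomp Require Import all_classical all_reals all_analysis.
From mathcomp Require Import lra.
Import Order.TTheory GRing.Theory Num.Theory.
Import numFieldNormedType.Exports.
Local Open Scope classical_set_scope.
Local Open Scope ring_scope.

Section Aux.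
Local Open Scope complex_scope.
Variable R : realType.
Variable X : normedModType R[i].

Definition NN (x : X) : R := complex.Re `|x|.
Definition NA (a : R[i]) : R := complex.Re `|a|.

Lemma NNE x : `|x| = (NN x)%:C.
Proof. by rewrite /NN RRe_real // normr_real. Qed.

Lemma NAE a : `|a| = (NA a)%:C.
Proof. by rewrite /NA RRe_real // normr_real. Qed.

Lemma NN_ge0 x : 0 <= NN x.
Proof. by rewrite -ler0c -NNE. Qed.

Lemma NA_ge0 a : 0 <= NA a.
Proof. by rewrite -ler0c -NAE. Qed.

Lemma NND x y : NN (x + y) <= NN x + NN y.
Proof. by rewrite -lecR rmorphD /= -!NNE ler_normD. Qed.

Lemma NNN x : NN (- x) = NN x.
Proof. by rewrite /NN normrN. Qed.

Lemma NNZ a x : NN (a *: x) = NA a * NN x.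
Proof. have := normrZ a x; rewrite !NNE NAE -rmorphM; exact: complexI. Qed.

Lemma NA_real (r : R) : 0 <= r -> NA r%:C = r.
Proof. move=> r0; have := ger0_norm (x:=r%:C); rewrite NAE ler0c => h; exact: complexI (h r0). Qed.

Lemma NN0 : NN 0 = 0.
Proof. by rewrite /NN normr0. Qed.


Lemma iso_to (S : X -> X) (Y : set X) : iso_on S Y ->
  exists2 m : R, 0 < m & forall y, Y y -> m * NN y <= NN (S y).
Proof.
case=> -[a b]; rewrite ltcE /= => /andP[/eqP b0 a0] H; subst b.
exists a^-1; first by rewrite invr_gt0.
move=> y Yy; have := H y Yy; rewrite !NNE complexr0 -rmorphM lecR => h.
by rewrite ler_pdivrMl // mulrC.
Qed.

Lemma iso_of (S : X -> X) (Y : set X) :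
  (exists2 m : R, 0 < m & forall y, Y y -> m * NN y <= NN (S y)) -> iso_on S Y.
Proof.
case=> m m0 H; exists (m^-1)%:C; first by rewrite ltcR invr_gt0.
move=> y Yy; rewrite !NNE -rmorphM lecR ler_pdivlMl //; exact: H.
Qed.


Lemma norm1E (u : X) : (`|u| = 1) <-> (NN u = 1).
Proof.
rewrite NNE; split; first by rewrite -(rmorph1 (real_complex R)); exact: complexI.
by move=> ->.
Qed.

Lemma dist_to (Y V : set X) : (0 < subspace_dist Y V)%E ->
  exists d : R, [/\ 0 < d, d <= 1 &
    forall u v, Y u -> NN u = 1 -> V v -> d <= NN (u - v)].
Proof.
move=> hD.
have lb : forall u v, Y u -> NN u = 1 -> V v ->
    (subspace_dist Y V <= (NN (u - v))%:E)%E.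
  move=> u v Yu Nu Vv; apply: ereal_inf_lbound; exists u, v; split => //.
  exact/norm1E.
move: hD lb; case: (subspace_dist Y V) => [r| |] //.
- rewrite lte_fin => r0 lb; exists (Num.min r 1); split.
  + by rewrite lt_min r0 ltr01.
  + by rewrite ge_min lexx orbT.
  + move=> u v Yu Nu Vv; have := lb u v Yu Nu Vv; rewrite lee_fin => h.
    by rewrite ge_min h.
- move=> _ lb; exists 1; split => //.
  move=> u v Yu Nu Vv; have := lb u v Yu Nu Vv; by rewrite leye_eq.
Qed.

Lemma dist_of (Y V : set X) (e : R) : 0 < e ->
  (forall u v, Y u -> NN u = 1 -> V v -> e <= NN (u - v)) ->
  (0 < subspace_dist Y V)%E.
Proof.
move=> e0 H; apply: (@lt_le_trans _ _ e%:E); first by rewrite lte_fin.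
apply/ereal_infP => x [u [v [Yu Nu Vv ->]]].
rewrite lee_fin; apply: H => //; exact/norm1E.
Qed.


Lemma key (T : {linear X -> X}) (Y : set X) (d : R) :
  linear_subspace Y -> 0 <= d ->
  (forall u y, Y u -> NN u = 1 -> Y y -> d <= NN (u - T y)) ->
  forall u y, Y u -> Y y -> d * NN u <= NN (u - T y).
Proof.
move=> [Y0 Yl] d0 H u y Yu Yy.
have [n0|nn0] := eqVneq (NN u) 0; first by rewrite n0 mulr0 NN_ge0.
have np : 0 < NN u by rewrite lt_def nn0 NN_ge0.
set a : R[i] := ((NN u)^-1)%:C.
have YZ : forall b v, Y v -> Y (b *: v).
  by move=> b v Yv; have := Yl b v 0 Yv Y0; rewrite addr0.
have := H (a *: u) (a *: y) (YZ _ _ Yu) _ (YZ _ _ Yy).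
rewrite linearZ /= -scalerBr !NNZ /a NA_real ?invr_ge0 ?NN_ge0 //.
rewrite mulVf // => /(_ erefl).
by rewrite mulrC -ler_pdivlMr // mulrC.
Qed.

End Aux.
Arguments NN {R X}.
Arguments NA {R}.
Arguments NN_ge0 {R X}.
Arguments NA_ge0 {R}.
Arguments NND {R X}.
Arguments NNN {R X}.
Arguments NNZ {R X}.
Arguments iso_to {R X S Y}.
Arguments iso_of {R X S Y}.
Arguments dist_to {R X Y V}.

Theorem mainTheorem7 (R : realType) (X : completeNormedModType R[i])
  (T : {linear X -> X}) (Y : set X) :
  continuous T ->
  closed_subspace Y ->
  iso_on T Y ->
  (0 < subspace_dist Y (img T Y))%E ->
  forall lambda : R[i],
    iso_on (fun x => (T x - lambda *: x)%R) Y /\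
    (0 < subspace_dist Y (img (fun x => (T x - lambda *: x)%R) Y))%E.
Proof.
move=> _ [HY _] isoT hdist lambda.
have [Y0 Yl] := HY.
have YZ : forall b v, Y v -> Y (b *: v).
  by move=> b v Yv; have := Yl b v 0 Yv Y0; rewrite addr0.
have YD : forall u v, Y u -> Y v -> Y (u + v).
  by move=> u v Yu Yv; have := Yl 1 u v Yu Yv; rewrite scale1r.
have [m m0 hm] := iso_to isoT.
have [d [d0 d1 hd]] := dist_to hdist.
have hk := @key _ _ T Y d HY (ltW d0)
  (fun u y Yu Nu Yy => hd u (T y) Yu Nu (ex_intro2 _ _ y Yy erefl)).
set L := NA lambda.
have L0 : 0 <= L := NA_ge0 lambda.
split.
  apply: iso_of; exists (d * m / 2); first by rewrite !divr_gt0 ?mulr_gt0.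
  move=> y Yy.
  set W := NN (T y - lambda *: y).
  have a0 := NN_ge0 y.
  have hA : d * (L * NN y) <= W.
    have := hk (lambda *: y) y (YZ _ _ Yy) Yy.
    by rewrite NNZ /W -[X in _ -> _ <= X]NNN opprB.
  have hB : NN (T y) <= W + L * NN y.
    have := NND (T y - lambda *: y) (lambda *: y).
    by rewrite subrK NNZ.
  have hmy := hm y Yy.
  have [Lm|Lm] := leP (m / 2) L.
    have : d * (m / 2 * NN y) <= d * (L * NN y).
      by rewrite ler_pM2l // ler_wpM2r.
    lra.
  have : L * NN y <= m / 2 * NN y by rewrite ler_wpM2r // ltW.
  have : d * (m / 2 * NN y) <= m / 2 * NN y.
    by rewrite ler_piMl // mulr_ge0 // divr_ge0 // ltW.
  lra.
set k := m / (4 * (L + 1)).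
have k0 : 0 < k by rewrite divr_gt0 // mulr_gt0 // ltr_wpDl.
have kE : k * (4 * (L + 1)) = m.
  by rewrite /k mulfVK // gt_eqF // mulr_gt0 // ltr_wpDl.
set s0 := Num.min (1 / 2) k.
have s0p : 0 < s0 by rewrite lt_min k0 divr_gt0.
have s0h : s0 <= 1 / 2 by rewrite ge_min lexx.
have s0k : s0 <= k by rewrite ge_min lexx orbT.
apply: ((@dist_of _ _ _ _ (d * s0))); first by rewrite mulr_gt0.
move=> u v Yu Nu [y Yy <-].
have -> : u - (T y - lambda *: y) = (u + lambda *: y) - T y.
  by rewrite opprB addrA.
set w := u + lambda *: y.
set W := NN (w - T y).
have a0 := NN_ge0 y.
have hA : d * NN w <= W := hk w y (YD _ _ Yu (YZ _ _ Yy)) Yy.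
have hB : NN (T y) <= W + NN w.
  have := NND (- (w - T y)) w.
  by rewrite NNN opprB subrK.
have hC : 1 <= NN w + L * NN y.
  have := NND w (- (lambda *: y)).
  by rewrite NNN NNZ /w addrK Nu.
have hmy := hm y Yy.
have [ss|ss] := leP s0 (NN w).
  have : d * s0 <= d * NN w by rewrite ler_pM2l.
  lra.
have h1 : 1 / 2 <= (L + 1) * NN y by nra.
have h2 : 2 * k <= m * NN y.
  rewrite -kE.
  have : 0 <= k by exact: ltW.
  nra.
have : d * s0 <= s0 by rewrite ler_piMl // ltW.
lra.
Qed.
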